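(* Let $f\ge0$ be integrable on $[-\pi,\pi]$ with $\int f>0$ and such that $\lim_{n\to\infty}\sigma_{n+1}^2(f)/\sigma_n^2(f)=1$, and let $p_n$ be the optimal polynomial for $f$. If $g$ is a nonnegative, bounded, measurable function on $[-\pi,\pi]$ that is continuous at $\lambda=0$, then $$\lim_{n\to\infty}\frac{\mathrm{Var}_{fg}(\widehat m_f)}{\sigma_n^2(f)}=g(0),\qquad \mathrm{Var}_{fg}(\widehat m_f):=\int_{-\pi}^{\pi}|p_n(e^{i\lambda})|^2f(\lambda)g(\lambda)\,d\lambda .$$
   Context: $\sigma_n^2(f)=\min_{q\in\mathcal{Q}_n(1)}\int_{-\pi}^{\pi}|q(e^{i\lambda})|^2f(\lambda)\,d\lambda$, with $\mathcal{Q}_n(1)$ the complex polynomials of degree at most $n$ satisfying $q(1)=1$; $p_n$ is the unique minimizer. $\mathrm{Var}_{fg}(\widehat m_f)$ is the variance, under spectral density $fg$, of the BLUE of the mean computed assuming spectral density $f$. *)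

(* Defs.v *)
From HB Require Import structures.
From mathcomp Require Import all_boot all_order all_algebra.
From mathcomp Require Import all_classical all_reals all_analysis.
From mathcomp Require Import complex.
Set Implicit Arguments. Unset Strict Implicit. Unset Printing Implicit Defensive.
Import Order.TTheory GRing.Theory Num.Theory.
Import numFieldNormedType.Exports.
Local Open Scope classical_set_scope.
Local Open Scope ring_scope.

Definition expi (R : realType) (x : R) : R[i] := Complex (cos x) (sin x).

Definition sqmod (R : realType) (z : R[i]) : R := (@complex.Re R z) ^+ 2 + (@complex.Im R z) ^+ 2.

(* Q_n(1): complex polynomials of degree at most n with q(1) = 1 *)
Definition Qn1 (R : realType) (n : nat) : set {poly R[i]} :=
  [set q : {poly R[i]} | (size q <= n.+1)%N /\ q.[1] = 1].

Definition wint (R : realType) (h : R -> R) (q : {poly R[i]}) : R :=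
  Rintegral (@lebesgue_measure R) `[(- pi)%R, pi]
    (fun x => sqmod (q.[expi x]) * h x).

(* sigma_n^2(f) = min over Q_n(1) of wint f q (here as an infimum; the min is attained) *)
Definition sigma2 (R : realType) (f : R -> R) (n : nat) : R :=
  inf [set wint f q | q in @Qn1 R n].

Definition optimal_poly (R : realType) (f : R -> R) (n : nat) (p : {poly R[i]}) :=
  @Qn1 R n p /\ (forall q, @Qn1 R n q -> wint f p <= wint f q).

(* Main.v *)
Require Import Defs.
From HB Require Import structures.
From mathcomp Require Import all_boot all_order all_algebra.
From mathcomp Require Import all_classical all_reals all_analysis.
From mathcomp Require Import complex.
From mathcomp Require Import lra zify ring.
Import Order.TTheory GRing.Theory Num.Theory.
Import numFieldNormedType.Exports.
Local Open Scope classical_set_scope.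
Local Open Scope ring_scope.
Section S.
Variable R : realType.
Lemma ReM (a b : R[i]) : complex.Re (a * b) = complex.Re a * complex.Re b - complex.Im a * complex.Im b.
Proof. by case: a => ? ?; case: b => ? ?. Qed.
Lemma ImM (a b : R[i]) : complex.Im (a * b) = complex.Re a * complex.Im b + complex.Im a * complex.Re b.
Proof. by case: a => ? ?; case: b => ? ?. Qed.
Lemma ReD (a b : R[i]) : complex.Re (a + b) = complex.Re a + complex.Re b.
Proof. by case: a => ? ?; case: b => ? ?. Qed.
Lemma ImD (a b : R[i]) : complex.Im (a + b) = complex.Im a + complex.Im b.
Proof. by case: a => ? ?; case: b => ? ?. Qed.

Lemma poly_props (q : {poly R[i]}) :
  continuous (fun x : R => complex.Re q.[expi x]) /\
  continuous (fun x : R => complex.Im q.[expi x]) /\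
  exists M : R, forall x : R, `|complex.Re q.[expi x]| <= M /\ `|complex.Im q.[expi x]| <= M.
Proof.
elim/poly_ind: q => [|q c [cR [cI [M hM]]]].
  have Z : forall x : R, (0 : {poly R[i]}).[expi x] = 0 by move=> x; rewrite horner0.
  split; [|split].
  - by rewrite (_ : (fun x => _) = fun=> 0); [exact: cst_continuous|apply: funext => x; rewrite Z].
  - by rewrite (_ : (fun x => _) = fun=> 0); [exact: cst_continuous|apply: funext => x; rewrite Z].
  - by exists 0 => x; rewrite Z normr0.
have E : forall x, (q * 'X + c%:P).[expi x] = q.[expi x] * expi x + c.
  by move=> x; rewrite hornerMXaddC.
split; [|split].
- have -> : (fun x : R => complex.Re (q * 'X + c%:P).[expi x]) =
    (fun x => complex.Re q.[expi x] * cos x - complex.Im q.[expi x] * sin x + complex.Re c).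
    by apply: funext => x; rewrite E ReD ReM.
  move=> x; apply: cvgD; last exact: cvg_cst.
  apply: cvgB; apply: cvgM; [exact: cR|exact: continuous_cos|exact: cI|exact: continuous_sin].
- have -> : (fun x : R => complex.Im (q * 'X + c%:P).[expi x]) =
    (fun x => complex.Re q.[expi x] * sin x + complex.Im q.[expi x] * cos x + complex.Im c).
    by apply: funext => x; rewrite E ImD ImM.
  move=> x; apply: cvgD; last exact: cvg_cst.
  apply: cvgD; apply: cvgM; [exact: cR|exact: continuous_sin|exact: cI|exact: continuous_cos].
- exists (M + M + `|complex.Re c| + `|complex.Im c|) => x.
  have [h1 h2] := hM x.
  have c1 := cos_max x; have s1 := sin_max x.
  have nc : 0 <= `|complex.Re c| by [].
  have ni : 0 <= `|complex.Im c| by [].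
  rewrite E ReD ReM ImD ImM /=.
  have hA : `|complex.Re q.[expi x] * cos x - complex.Im q.[expi x] * sin x| <= M + M.
    rewrite (le_trans (ler_normB _ _))// lerD// normrM.
    * by rewrite -[M]mulr1 ler_pM.
    * by rewrite -[M]mulr1 ler_pM.
  have hB : `|complex.Re q.[expi x] * sin x + complex.Im q.[expi x] * cos x| <= M + M.
    rewrite (le_trans (ler_normD _ _))// lerD// normrM.
    * by rewrite -[M]mulr1 ler_pM.
    * by rewrite -[M]mulr1 ler_pM.
  split; (apply: le_trans; first exact: ler_normD); lra.
Qed.

Definition sq (q : {poly R[i]}) (x : R) : R := sqmod q.[expi x].

Definition D : set R := `[(- pi)%R, pi].

Definition LR := measurableTypeR R.
Lemma cvm (E : set R) (g : R -> R) : measurable_fun E g -> @measurable_fun _ _ LR R E g.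
Proof. move=> h; exact: h. Qed.
Lemma cv2 (E : set R) : measurable E -> @measurable _ LR E.
Proof. move=> h; exact: h. Qed.

Lemma mD : @measurable _ LR D. Proof. apply: cv2; exact: measurable_itv. Qed.

Definition good (h : R -> R) :=
  @measurable_fun _ _ LR R D h /\ exists M, forall x, D x -> `|h x| <= M.

Lemma good_cont h : continuous h -> (exists M, forall x, D x -> `|h x| <= M) -> good h.
Proof.
move=> ch hM; split => //; apply: cvm.
apply: (measurable_funS (E := setT)) => //.
exact: measurable_realfun.continuous_measurable_fun.
Qed.

Lemma sq_ge0 q x : 0 <= sq q x.
Proof. by rewrite /sq /sqmod addr_ge0 // sqr_ge0. Qed.

Lemma good_sq q : good (sq q).
Proof.
have [cR [cI [M hM]]] := poly_props q.
apply: good_cont.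
  have -> : sq q = fun x => complex.Re q.[expi x] * complex.Re q.[expi x]
                        + complex.Im q.[expi x] * complex.Im q.[expi x].
    by apply: funext => x; rewrite /sq /sqmod !expr2.
  move=> x; apply: cvgD; apply: cvgM; [exact: cR|exact: cR|exact: cI|exact: cI].
exists (M ^+ 2 + M ^+ 2) => x _.
have [h1 h2] := hM x.
rewrite ger0_norm ?sq_ge0 // /sq /sqmod.
move: h1 h2; rewrite !ler_norml => /andP[a1 a2] /andP[b1 b2].
nra.
Qed.

Lemma good_cst c : good (fun=> c).
Proof. by split; [exact: measurable_cst | exists `|c|]. Qed.

Lemma good_cos : good cos.
Proof. by apply: good_cont; [exact: continuous_cos | exists 1 => x _; exact: cos_max]. Qed.

Lemma good_add h1 h2 : good h1 -> good h2 -> good (fun x => h1 x + h2 x).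
Proof.
move=> [m1 [M1 b1]] [m2 [M2 b2]]; split; first exact: measurable_realfun.measurable_funD.
exists (M1 + M2) => x Dx; rewrite (le_trans (ler_normD _ _))// lerD//; by [apply: b1|apply: b2].
Qed.

Lemma good_mul h1 h2 : good h1 -> good h2 -> good (fun x => h1 x * h2 x).
Proof.
move=> [m1 [M1 b1]] [m2 [M2 b2]]; split; first exact: measurable_realfun.measurable_funM.
exists (M1 * M2) => x Dx; rewrite normrM ler_pM//; by [apply: b1|apply: b2].
Qed.


Section Integ.
Variable f : R -> R.
Hypothesis f0 : forall x, x \in `[(- pi)%R, pi] -> 0 <= f x.
Hypothesis fi : (@lebesgue_measure R).-integrable `[(- pi)%R, pi] (EFin \o f).

Definition I (h : R -> R) := Rintegral (@lebesgue_measure R) D (fun x => h x * f x).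

Lemma intg h : good h -> (@lebesgue_measure R).-integrable D (EFin \o (fun x => h x * f x)).
Proof.
move=> [mh [M hM]].
have := integrableMr mD mh _ fi.
have -> : (EFin \o (fun x => h x * f x)) = ((EFin \o h) \* (EFin \o f))%E.
  by apply: funext => x /=; rewrite EFinM.
apply; exists M; split; first exact: num_real.
move=> y My x Dx /=; apply: le_trans (hM x Dx) _; exact: ltW.
Qed.

Lemma I_lin a b h1 h2 : good h1 -> good h2 ->
  I (fun x => a * h1 x + b * h2 x) = a * I h1 + b * I h2.
Proof.
move=> g1 g2; rewrite /I.
have -> : (fun x => (a * h1 x + b * h2 x) * f x) =
          (fun x => a * (h1 x * f x) + b * (h2 x * f x)).
  by apply: funext => x; rewrite mulrDl !mulrA.
have i1 : (@lebesgue_measure R).-integrable D (EFin \o (fun x => a * (h1 x * f x))).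
  have := intg _ (good_mul _ _ (good_cst a) g1).
  by congr (_.-integrable _ _); apply: funext => x /=; rewrite mulrA.
have i2 : (@lebesgue_measure R).-integrable D (EFin \o (fun x => b * (h2 x * f x))).
  have := intg _ (good_mul _ _ (good_cst b) g2).
  by congr (_.-integrable _ _); apply: funext => x /=; rewrite mulrA.
rewrite (RintegralD mD i1 i2) (RintegralZl _ mD (intg _ g1)) (RintegralZl _ mD (intg _ g2)) //.
Qed.

Lemma I_le h1 h2 : good h1 -> good h2 -> (forall x, D x -> h1 x <= h2 x) -> I h1 <= I h2.
Proof.
move=> g1 g2 h12; apply: le_Rintegral; [exact: mD|exact: intg|exact: intg|].
move=> x Dx; apply: ler_wpM2r; last exact: h12.
apply: f0; exact: Dx.
Qed.

End Integ.

Definition rpol : {poly R[i]} := (Complex (2^-1) 0)%:P * ('X + 1%:P).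

Lemma sqmodM (a b : R[i]) : sqmod (a * b) = sqmod a * sqmod b.
Proof. rewrite /sqmod ReM ImM; ring. Qed.

Lemma sq_r x : sqmod rpol.[expi x] = (1 + cos x) / 2.
Proof.
rewrite /rpol hornerM hornerC hornerD hornerX hornerC /sqmod ReM ImM ReD ImD /=.
have h := cos2Dsin2 x.
transitivity (4^-1 * (cos x ^+ 2 + sin x ^+ 2) + 2^-1 * cos x + 4^-1).
  by field.
by rewrite h; field.
Qed.

Lemma r_Q n q : Qn1 n q -> Qn1 n.+1 (q * rpol).
Proof.
move=> [sq1 q1]; split.
  have h1 := size_polyMleq q rpol.
  have h2 : (size rpol <= 2)%N.
    apply: leq_trans (size_polyMleq _ _) _.
    rewrite size_XaddC; by rewrite addn2 /= ltnS size_polyC_leq1.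
  apply: leq_trans h1 _.
  move: sq1 h2; lia.
rewrite hornerM q1 mul1r /rpol hornerM hornerC hornerD hornerX hornerC.
apply/eqP; rewrite eq_complex /=; apply/andP; split; apply/eqP.
  by field.
ring.
Qed.

Lemma sigma_eq (f : R -> R) n q : optimal_poly f n q -> sigma2 f n = wint f q.
Proof.
move=> [Qq opt]; rewrite /sigma2; apply/le_anti/andP; split.
  apply: ge_inf; last by exists q.
  by exists (wint f q) => _ [q' Qq' <-]; exact: opt.
apply: lb_le_inf; first by exists (wint f q), q.
by move=> _ [q' Qq' <-]; exact: opt.
Qed.

Lemma pointwise (g : R -> R) (M e : R) :
  (forall x, x \in `[(- pi)%R, pi] -> 0 <= g x) ->
  (forall x, x \in `[(- pi)%R, pi] -> g x <= M) ->
  {for 0, continuous g} -> 0 < e ->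
  exists2 K, 0 < K & forall x, D x -> `|g x - g 0| <= e + K * (1 - cos x).
Proof.
move=> g0 gM cg e0.
have := cvgr_dist_lt _ _ cg _ e0.
move=> hn; have [d d0 hd] := (nbhs_ballP _ _).1 (hn (nbhs_filter 0)).
have Mge0 : 0 <= M.
  have z : (0:R) \in `[(- pi)%R, pi] by rewrite in_itv /= oppr_le0 pi_ge0.
  exact: le_trans (g0 _ z) (gM _ z).
have z : (0:R) \in `[(- pi)%R, pi] by rewrite in_itv /= oppr_le0 pi_ge0.
have pi2 := @pi_ge2 R.
set d' := Num.min d 1.
have d'0 : 0 < d' by rewrite lt_min d0 ltr01.
have d'1 : d' <= 1 by rewrite ge_min lexx orbT.
have d'd : d' <= d by rewrite ge_min lexx.
have d'in : d' \in `[0, pi] by rewrite in_itv /= (ltW d'0) /=; lra.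
have in0 : (0:R) \in `[0, pi] by rewrite in_itv /= lexx pi_ge0.
have cd : cos d' < 1 by rewrite -cos0 ltr_cos.
set c := 1 - cos d'.
have c0 : 0 < c by rewrite subr_gt0.
exists ((M + 1) / c); first by rewrite divr_gt0 //; lra.
move=> x Dx.
have xin : x \in `[(- pi)%R, pi] by exact: Dx.
have gx0 := g0 _ xin; have gxM := gM _ xin; have g00 := g0 _ z; have g0M := gM _ z.
have cx1 := cos_le1 x.
have Kc : 0 <= (M + 1) / c * (1 - cos x) by rewrite mulr_ge0 // ?subr_ge0 // divr_ge0 //; lra.
have [xd|dx] := ltP `|x| d'.
  have bx : ball (0:R) d x by rewrite /ball /= sub0r normrN (lt_le_trans xd d'd).
  have := hd _ bx; rewrite /= distrC => h; lra.
have xabs : `|x| \in `[0, pi].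
  move: xin; rewrite !in_itv /= normr_ge0 /= => /andP[a b]; rewrite ler_norml; lra.
have cxd : cos x <= cos d'.
  rewrite -cos_norm; move: dx; rewrite le_eqVlt => /orP[/eqP <-//|dx].
  by apply: ltW; rewrite ltr_cos.
have h1 : 1 <= (1 - cos x) / c by rewrite ler_pdivlMr // mul1r /c; lra.
have e1 : (M + 1) / c * (1 - cos x) = (M + 1) * ((1 - cos x) / c) by rewrite mulrA mulrAC.
have : M + 1 <= (M + 1) * ((1 - cos x) / c).
  by rewrite -{1}[M + 1]mulr1 ler_wpM2l //; lra.
rewrite e1.
have : `|g x - g 0| <= M by rewrite ler_norml; lra.
lra.
Qed.
End S.

Arguments good {R} h. Arguments D {R}. Arguments sq {R} q x. Arguments I {R} f h. Arguments rpol {R}.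
Arguments good_sq {R} q. Arguments good_cst {R} c. Arguments good_cos {R}.
Arguments good_add {R h1 h2}. Arguments good_mul {R h1 h2}. Arguments sq_ge0 {R} q x.
Arguments sq_r {R} x. Arguments sqmodM {R}. Arguments r_Q {R n q}. Arguments sigma_eq {R f n q}.
Arguments pointwise {R g M e}. Arguments I_lin {R f} fi a b {h1 h2}. Arguments I_le {R f} f0 fi {h1 h2}.
Arguments cvm {R E g}.

Lemma per_n (R : realType) (f g : R -> R) (q q' : {poly R[i]}) (s s' K ep : R) :
  (forall x, x \in `[(- pi)%R, pi] -> 0 <= f x) ->
  (@lebesgue_measure R).-integrable `[(- pi)%R, pi] (EFin \o f) ->
  good g -> 0 < K ->
  (forall x, D x -> `|g x - g 0| <= ep + K * (1 - cos x)) ->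
  s = wint f q -> s' = wint f q' -> wint f q' <= wint f (q * rpol) -> 0 < s ->
  `|g 0 - wint (fun x => f x * g x) q / s| <= ep + 2 * K * (1 - s' / s).
Proof.
move=> f0 fi gg K0 hK es es' opt s0.
have gs := good_sq q.
have gu : good (fun x : R => 1 - cos x).
  have [mc _] := @good_cos R.
  split.
    have mc1 : @measurable_fun _ _ (LR R) R D (fun=> (1:R)) by exact: measurable_cst.
    exact: measurable_realfun.measurable_funB mc1 mc.
  exists 2 => x _; have := cos_max x; rewrite !ler_norml => /andP[a b]; lra.
have gsg := good_mul gs gg.
have gsu := good_mul gs gu.
set A := I f (fun x => sq q x * g x).
set B := I f (fun x => sq q x * (1 - cos x)).
have hs : s = I f (sq q) by rewrite es.
have hA : wint (fun x => f x * g x) q = A.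
  rewrite /wint /A /I /D; congr Rintegral; apply: funext => x; rewrite /sq; ring.
have hr : wint f (q * rpol) = I f (fun x => 1 * sq q x + (- 2^-1) * (sq q x * (1 - cos x))).
  rewrite /wint /I /D; congr Rintegral; apply: funext => x.
  by rewrite hornerM sqmodM sq_r /sq; field.
rewrite (I_lin fi _ _ gs gsu) -hs -/B in hr.
have up : A - g 0 * s <= ep * s + K * B.
  have e1 := I_lin fi 1 (- g 0) gsg gs.
  have e2 := I_lin fi ep K gs gsu.
  rewrite mul1r -/A -hs mulNr in e1; rewrite -hs -/B in e2.
  rewrite -e1 -e2; apply: I_le => //.
    exact: good_add (good_mul (good_cst _) gsg) (good_mul (good_cst _) gs).
    exact: good_add (good_mul (good_cst _) gs) (good_mul (good_cst _) gsu).
  move=> x Dx; have := hK x Dx; rewrite ler_norml => /andP[_ h].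
  have := sq_ge0 q x; nra.
have lo : - (ep * s + K * B) <= A - g 0 * s.
  have e1 := I_lin fi 1 (- g 0) gsg gs.
  have e2 := I_lin fi (- ep) (- K) gs gsu.
  rewrite mul1r -/A -hs mulNr in e1; rewrite -hs -/B in e2.
  have -> : - (ep * s + K * B) = - ep * s + - K * B by ring.
  rewrite -e1 -e2; apply: I_le => //.
    exact: good_add (good_mul (good_cst _) gs) (good_mul (good_cst _) gsu).
    exact: good_add (good_mul (good_cst _) gsg) (good_mul (good_cst _) gs).
  move=> x Dx; have := hK x Dx; rewrite ler_norml => /andP[h _].
  have := sq_ge0 q x; nra.
have hB : B <= 2 * (s - s') by move: opt; rewrite -es' hr => h; lra.
rewrite hA.
set z := A / s; have Az : A = z * s by rewrite /z mulrVK ?unitfE ?gt_eqF.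
set t := s' / s; have st : s' = t * s by rewrite /t mulrVK ?unitfE ?gt_eqF.
rewrite st in hB; rewrite Az in up lo.
have KB : K * B <= K * (2 * (s - t * s)) by rewrite ler_wpM2l // ltW.
rewrite ler_norml; apply/andP; split.
- have : s * (z - g 0) <= s * (ep + 2 * K * (1 - t)) by lra.
  by rewrite ler_pM2l //; lra.
- have : s * (g 0 - z) <= s * (ep + 2 * K * (1 - t)) by lra.
  by rewrite ler_pM2l //; lra.
Qed.

Arguments per_n {R f g q q' s s' K ep}.

Theorem lemma5p3 (R : realType) (f g : R -> R) (p : nat -> {poly R[i]}) :
  (forall x, x \in `[(- pi)%R, pi] -> 0 <= f x) ->
  (@lebesgue_measure R).-integrable `[(- pi)%R, pi] (EFin \o f) ->
  0 < Rintegral (@lebesgue_measure R) `[(- pi)%R, pi] f ->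
  (fun n => sigma2 f n.+1 / sigma2 f n) @ \oo --> (1 : R) ->
  (forall n, optimal_poly f n (p n)) ->
  (forall x, x \in `[(- pi)%R, pi] -> 0 <= g x) ->
  (exists M : R, forall x, x \in `[(- pi)%R, pi] -> g x <= M) ->
  measurable_fun `[(- pi)%R, pi] g ->
  {for 0, continuous g} ->
  (fun n => wint (fun x => f x * g x) (p n) / sigma2 f n) @ \oo --> g 0.
Proof.
move=> f0 fi _ hlim hopt g0 [M gM] mg cg.
have gg : good g.
  split; first exact: cvm mg.
  by exists M => x Dx; rewrite ger0_norm; [exact: gM | exact: g0].
apply: (proj2 (@cvgrPdist_le _ _ _ eventually _ _ _)) => e e0.
have e20 : 0 < e / 2 by rewrite divr_gt0.
have [K K0 hK] := pointwise g0 gM cg e20.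
have m0 : 0 < Num.min (2^-1) (e / (4 * K)).
  by rewrite lt_min invr_gt0 ltr0n /= divr_gt0 // mulr_gt0.
have hl : \forall n \near \oo, `|1 - sigma2 f n.+1 / sigma2 f n| <= Num.min (2^-1) (e / (4 * K)).
  exact: ((cvgrPdist_le _ _).1 hlim _ m0).
near=> n.
have hn : `|1 - sigma2 f n.+1 / sigma2 f n| <= Num.min (2^-1) (e / (4 * K)).
  by near: n.
have hm1 : Num.min (2^-1) (e / (4 * K)) <= 2^-1 by rewrite ge_min lexx.
have hm2 : Num.min (2^-1) (e / (4 * K)) <= e / (4 * K) by rewrite ge_min lexx orbT.
have s_ge0 : 0 <= sigma2 f n.
  rewrite (sigma_eq (hopt n)); apply: Rintegral_ge0 => x Dx.
  by apply: mulr_ge0; [exact: sq_ge0 | exact: f0].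
have s0 : 0 < sigma2 f n.
  rewrite lt_neqAle s_ge0 andbT eq_sym; apply/negP => /eqP z.
  move: hn; rewrite z invr0 mulr0 subr0 normr1 => h.
  have : (1:R) <= 2^-1 := le_trans h hm1.
  lra.
have := per_n f0 fi gg K0 hK (sigma_eq (hopt n)) (sigma_eq (hopt n.+1))
  ((hopt n.+1).2 _ (r_Q (hopt n).1)) s0.
set t := sigma2 f n.+1 / sigma2 f n.
move: hn; rewrite -/t => hn h.
apply: le_trans h _.
have h3 : 1 - t <= e / (4 * K) by apply: le_trans (ler_norm _) (le_trans hn hm2).
have : 2 * K * (1 - t) <= 2 * K * (e / (4 * K)) by rewrite ler_wpM2l // mulr_ge0 // ltW.
have -> : 2 * K * (e / (4 * K)) = e / 2 by field; rewrite gt_eqF.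
lra.
Unshelve. all: by end_near.
Qed.
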